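(* Let $q\ge 1$ and, for each $k\in\{1,\dots,q\}$, let $M_k\ge 2$ be an integer and $0=x_{k,0}<x_{k,1}<\dots<x_{k,M_k}=1$. Let data values $z_{(1,j_1)\cdots(q,j_q)}\in\mathbb{R}$ be given for all $(j_1,\dots,j_q)\in\prod_{k=1}^q\{0,1,\dots,M_k\}$. Let the maps $u_{k,i}$ and the function $\eta$ be as in the context, and for each $(i_1,\dots,i_q)\in\prod_{k=1}^q\{1,\dots,M_k\}$ let $F_{i_1\cdots i_q}:I^q\times\mathbb{R}\to\mathbb{R}$ be continuous and satisfy: (1) $F_{i_1\cdots i_q}\big(x_{1,k_1},\dots,x_{q,k_q},z_{(1,k_1)\cdots(q,k_q)}\big)=z_{(1,\eta(i_1,k_1))\cdots(q,\eta(i_q,k_q))}$ for all $(k_1,\dots,k_q)\in\prod_{j=1}^q\{0,M_j\}$; (2) there is $0<\gamma_{i_1\cdots i_q}<1$ with $|F_{i_1\cdots i_q}(x,z^* )-F_{i_1\cdots i_q}(x,z^{**})|\le\gamma_{i_1\cdots i_q}|z^*-z^{**}|$ for all $x\in I^q$, $z^*,z^{**}\in\mathbb{R}$; (3) (matching conditions) for every $k\in\{1,\dots,q\}$, every $i_k\in\{1,\dots,M_k-1\}$ and every choice of $i_j\in\{1,\dots,M_j\}$ for $j\ne k$, putting $x_k^*=u_{k,i_k}^{-1}(x_{k,i_k})=u_{k,i_k+1}^{-1}(x_{k,i_k})$, one has $F_{i_1\cdots i_{k-1}\,i_k\,i_{k+1}\cdots i_q}(x_1,\dots,x_{k-1},x_k^*,x_{k+1},\dots,x_q,z)=F_{i_1\cdots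 i_{k-1}\,(i_k+1)\,i_{k+1}\cdots i_q}(x_1,\dots,x_{k-1},x_k^*,x_{k+1},\dots,x_q,z)$ for all $x_j\in I$ ($j\neq k$) and $z\in\mathbb{R}$. Define $\Omega_{i_1\cdots i_q}:I^q\times\mathbb{R}\to I^q\times\mathbb{R}$ by $\Omega_{i_1\cdots i_q}(x_1,\dots,x_q,z)=\big(u_{1,i_1}(x_1),\dots,u_{q,i_q}(x_q),F_{i_1\cdots i_q}(x_1,\dots,x_q,z)\big)$. Then there is a unique continuous function $\mathcal{A}:I^q\to\mathbb{R}$ whose graph $H=\{(x,\mathcal{A}(x)):x\in I^q\}$ satisfies $H=\bigcup_{(i_1,\dots,i_q)\in\prod_k\{1,\dots,M_k\}}\Omega_{i_1\cdots i_q}(H)$; moreover $\mathcal{A}(x_{1,j_1},\dots,x_{q,j_q})=z_{(1,j_1)\cdots(q,j_q)}$ for all $(j_1,\dots,j_q)\in\prod_{k=1}^q\{0,\dots,M_k\}$.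
   Context: $I=[0,1]$, $I^q$ is the $q$-fold Cartesian product. For $k\in\{1,\dots,q\}$ and $i\in\{1,\dots,M_k\}$, $I_{k,i}=[x_{k,i-1},x_{k,i}]$ and $u_{k,i}:I\to I_{k,i}$ is a homeomorphism onto $I_{k,i}$ which is a contraction ($|u_{k,i}(x)-u_{k,i}(y)|\le\mu_{k,i}|x-y|$ with $0<\mu_{k,i}<1$) and satisfies $u_{k,i}(0)=x_{k,i-1}$, $u_{k,i}(1)=x_{k,i}$ if $i$ is odd, and $u_{k,i}(0)=x_{k,i}$, $u_{k,i}(1)=x_{k,i-1}$ if $i$ is even. The function $\eta$ is defined on pairs $(i,e)$ with $i$ an integer and $e\in\{0,M_1,\dots,M_q\}$ by: if $i$ is odd, $\eta(i,0)=i-1$ and $\eta(i,M_j)=i$; if $i$ is even, $\eta(i,0)=i$ and $\eta(i,M_j)=i-1$. *)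

(* Defs.v *)
(* Stdlib reals R, with MathComp ordinals 'I_q as the index set {1..q}
   (shifted to {0..q-1}). Points of I^q are functions 'I_q -> R. *)
From Stdlib Require Import Reals.
From mathcomp Require Import all_boot.

Set Implicit Arguments.
Unset Strict Implicit.
Unset Printing Implicit Defensive.

Local Open Scope R_scope.

Definition inI (t : R) : Prop := 0 <= t <= 1.

Definition inIq (q : nat) (x : 'I_q -> R) : Prop := forall k, inI (x k).

Definition upd (q : nat) (x : 'I_q -> R) (k : 'I_q) (t : R) : 'I_q -> R :=
  fun j => if j == k then t else x j.

Definition updn (q : nat) (i : 'I_q -> nat) (k : 'I_q) (n : nat) : 'I_q -> nat :=
  fun j => if j == k then n else i j.

Definition cont_on_interval (f : R -> R) (a b : R) : Prop :=
  forall s, a <= s <= b -> forall eps, 0 < eps -> exists delta, 0 < delta /\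
    forall t, a <= t <= b -> Rabs (t - s) < delta -> Rabs (f t - f s) < eps.

Definition cont_Iq (q : nat) (A : ('I_q -> R) -> R) : Prop :=
  forall x, inIq x -> forall eps, 0 < eps -> exists delta, 0 < delta /\
    forall y, inIq y -> (forall k, Rabs (y k - x k) < delta) ->
      Rabs (A y - A x) < eps.

Definition cont_IqR (q : nat) (F : ('I_q -> R) -> R -> R) : Prop :=
  forall x z, inIq x -> forall eps, 0 < eps -> exists delta, 0 < delta /\
    forall y w, inIq y -> (forall k, Rabs (y k - x k) < delta) ->
      Rabs (w - z) < delta -> Rabs (F y w - F x z) < eps.

Definition homeo_onto (f : R -> R) (a b : R) : Prop :=
  cont_on_interval f 0 1 /\
  exists g : R -> R,
    (forall t, inI t -> a <= f t <= b /\ g (f t) = t) /\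
    (forall s, a <= s <= b -> inI (g s) /\ f (g s) = s) /\
    cont_on_interval g a b.

Definition contraction_on_I (f : R -> R) : Prop :=
  exists mu, 0 < mu < 1 /\
    forall s t, inI s -> inI t -> Rabs (f s - f t) <= mu * Rabs (s - t).

(* the function eta of the paper, for e in {0, M_1, ..., M_q} *)
Definition eta (i e : nat) : nat :=
  if odd i then (if e == 0%N then (i - 1)%N else i)
  else (if e == 0%N then i else (i - 1)%N).

Definition idx_range (q : nat) (M : 'I_q -> nat) (i : 'I_q -> nat) : Prop :=
  forall k, (1 <= i k <= M k)%N.

Definition grid (q : nat) (xg : 'I_q -> nat -> R) (j : 'I_q -> nat) : 'I_q -> R :=
  fun k => xg k (j k).

(* Main.v *)
Require Import Defs.
From Stdlib Require Import Reals Lra Classical ClassicalEpsilon FunctionalExtensionality.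
From mathcomp Require Import all_boot.

Local Open Scope R_scope.

Module Gen.


Lemma fin_min_seq (T : eqType) (P : T -> R -> Prop) (s : seq T) :
  (forall t d d', 0 < d' <= d -> P t d -> P t d') ->
  (forall t, t \in s -> exists d, 0 < d /\ P t d) ->
  exists d, 0 < d /\ forall t, t \in s -> P t d.
Proof.
move=> Hdn; elim: s => [|a s IH] H.
  by exists 1; split; [lra| move=> t].
have [d1 [H1 P1]] := H a (mem_head _ _).
have [d2 [H2 P2]] : exists d, 0 < d /\ forall t, t \in s -> P t d.
  by apply: IH => t ts; apply: H; rewrite in_cons ts orbT.
exists (Rmin d1 d2); split; first by apply: Rmin_pos.
move=> t; rewrite in_cons => /orP [/eqP -> | ts].
  apply: Hdn P1; split; [by apply: Rmin_pos | apply: Rmin_l].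
apply: Hdn (P2 t ts); split; [by apply: Rmin_pos | apply: Rmin_r].
Qed.

Lemma fin_min_fin (T : finType) (P : T -> R -> Prop) :
  (forall t d d', 0 < d' <= d -> P t d -> P t d') ->
  (forall t, exists d, 0 < d /\ P t d) ->
  exists d, 0 < d /\ forall t, P t d.
Proof.
move=> Hdn H; have [d [Hd Hs]] := @fin_min_seq T P (enum T) Hdn (fun t _ => H t).
by exists d; split=> // t; apply: Hs; rewrite mem_enum.
Qed.

Lemma creep (G : R -> R -> Prop) :
  (forall a b c, G a b -> G b c -> G a c) ->
  (forall t, 0 <= t <= 1 -> exists e, 0 < e /\
      forall a b, t - e < a -> a <= b -> b < t + e -> G a b) ->
  G 0 1.
Proof.
move=> Htr Hloc.
pose S := fun s => 0 <= s <= 1 /\ G 0 s.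
have S0 : S 0.
  have [e [He Ht]] := Hloc 0 ltac:(lra).
  split; [lra|]; apply: Ht; lra.
have Sb : bound S by exists 1 => s [[_ ?] _].
have [c Hc] := completeness S Sb (ex_intro _ 0 S0).
have c0 : 0 <= c by apply: (proj1 Hc) S0.
have c1 : c <= 1 by apply: (proj2 Hc) => s [[]].
have [e [He Ht]] := Hloc c ltac:(lra).
have [s [[Ss Gs] cs]] : exists s, S s /\ c - e < s.
  apply: NNPP => Hn.
  have : c <= c - e.
    apply: (proj2 Hc) => s Ss; apply: Rnot_lt_le => cs; apply: Hn; by exists s.
  lra.
have sc : s <= c by apply: (proj1 Hc).
pose b := Rmin (c + e / 2) 1.
have Gb : G 0 b.
  apply: Htr Gs _; apply: Ht; rewrite /b.
  - lra.
  - apply: Rmin_glb; lra.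
  - have := Rmin_l (c + e/2) 1; lra.
have : b <= c.
  apply: (proj1 Hc); split=> //; split; rewrite /b.
  - apply: Rmin_glb; lra.
  - apply: Rmin_r.
rewrite /b /Rmin; case: Rle_dec => H; first lra.
move=> _; by move: Gb; rewrite /b /Rmin; case: Rle_dec.
Qed.

Set Implicit Arguments.
Unset Strict Implicit.


Lemma Rabs_bnd a b e : Rabs (a - b) < e -> Rabs a <= Rabs b + e.
Proof. move=> H; have := Rabs_triang_inv a b; lra. Qed.

Lemma cont_bounded q (h : ('I_q -> R) -> R) :
  cont_Iq h -> exists B, forall y, inIq y -> Rabs (h y) <= B.
Proof.
move=> Hc.
pose Claim m := forall x, inIq x -> exists d B, 0 < d /\ forall y, inIq y ->
   (forall j : 'I_q, (m <= j)%N -> Rabs (y j - x j) < d) -> Rabs (h y) <= B.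
have HC : forall m, (m <= q)%N -> Claim m.
  elim=> [|m IH] Hm.
    move=> x Hx; have [d [Hd Hd']] := Hc x Hx 1 Rlt_0_1.
    exists d, (Rabs (h x) + 1); split=> // y Hy Hj.
    by apply: Rabs_bnd; apply: Hd' => // k; apply: Hj.
  have Hm' : (m < q)%N by [].
  have {}IH := IH (ltnW Hm').
  pose km := Ordinal Hm'.
  move=> x Hx.
  pose G a b := exists d B, 0 < d /\ forall y, inIq y -> a <= y km <= b ->
     (forall j : 'I_q, (m.+1 <= j)%N -> Rabs (y j - x j) < d) -> Rabs (h y) <= B.
  have : G 0 1.
    apply: creep.
      move=> a b c [d1 [B1 [H1 P1]]] [d2 [B2 [H2 P2]]].
      exists (Rmin d1 d2), (Rmax B1 B2); split; first by apply: Rmin_pos.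
      move=> y Hy Hab Hj.
      case: (Rle_dec (y km) b) => Hb.
        apply: Rle_trans (Rmax_l _ _); apply: P1 => //; first lra.
        move=> j Hj'; have := Hj j Hj'; have := Rmin_l d1 d2; lra.
      apply: Rle_trans (Rmax_r _ _); apply: P2 => //; first lra.
      move=> j Hj'; have := Hj j Hj'; have := Rmin_r d1 d2; lra.
    move=> t Ht.
    have Hx' : inIq (upd x km t).
      move=> j; rewrite /upd; case: (j == km) => //; exact: Hx.
    have [d [B [Hd P]]] := IH _ Hx'.
    exists d; split=> // a b Ha Hab Hb.
    exists d, B; split=> // y Hy Hy' Hj.
    apply: P => // j Hj'; rewrite /upd.
    case: eqP => [->|Hne]; first by rewrite /=; apply: Rabs_def1; lra.
    apply: Hj; rewrite ltn_neqAle Hj' andbT; apply/eqP => E; apply: Hne.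
    by apply: val_inj; rewrite /= E.
  move=> [d [B [Hd P]]]; exists d, B; split=> // y Hy Hj.
  by apply: P => //; apply: Hy.
have [d [B [_ P]]] := HC q (leqnn q) (fun _ => 0) (fun _ => conj (Rle_refl 0) Rle_0_1).
exists B => y Hy; apply: P => // j; by rewrite leqNgt ltn_ord.
Qed.

Lemma gsmall g C : 0 <= g < 1 -> 0 <= C -> forall eps, 0 < eps ->
  exists N, forall n, (N <= n)%N -> g ^ n * C < eps.
Proof.
move=> Hg HC eps He.
have Hg' : Rabs g < 1 by rewrite Rabs_pos_eq; lra.
have [N HN] := pow_lt_1_zero g Hg' (eps / (C + 1)) ltac:(apply: Rdiv_lt_0_compat; lra).
exists N => n /leP Hn; have := HN n Hn.
have Hp := pow_le g n (proj1 Hg).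
rewrite Rabs_pos_eq // => H.
have E : eps / (C + 1) * (C + 1) = eps by field; lra.
have : g ^ n * (C + 1) < eps / (C + 1) * (C + 1) by apply: Rmult_lt_compat_r; lra.
rewrite E; nra.
Qed.

Lemma zero_of_small a : (forall eps, 0 < eps -> Rabs a < eps) -> a = 0.
Proof.
move=> H; apply: NNPP => Ha; have := H (Rabs a) (Rabs_pos_lt _ Ha); lra.
Qed.

Lemma lim_le u l a C m : Un_cv u l ->
  (forall n, (m <= n)%N -> Rabs (u n - a) <= C) -> Rabs (l - a) <= C.
Proof.
move=> Hu Hb; apply: Rnot_lt_le => Hc.
have [N HN] := Hu (Rabs (l - a) - C) ltac:(lra).
have := HN (maxn N m) ltac:(apply/leP; exact: leq_maxl).
have := Hb (maxn N m) (leq_maxr _ _).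
rewrite /Rdist; move: (u (maxn N m)) => v.
split_Rabs; lra.
Qed.

End Gen.
Import Gen.

Module Main1.
Set Implicit Arguments.
Unset Strict Implicit.


Section Main.
Variables (q : nat) (hq : (1 <= q)%N)
  (M : 'I_q -> nat) (hM : forall k, (2 <= M k)%N)
  (xg : 'I_q -> nat -> R)
  (hx0 : forall k, xg k 0%N = 0)
  (hxM : forall k, xg k (M k) = 1)
  (hxinc : forall k n, (n < M k)%N -> xg k n < xg k n.+1)
  (z : ('I_q -> nat) -> R)
  (u : 'I_q -> nat -> R -> R)
  (hu_homeo : forall k i, (1 <= i <= M k)%N ->
      homeo_onto (u k i) (xg k i.-1) (xg k i))
  (hu_contr : forall k i, (1 <= i <= M k)%N -> contraction_on_I (u k i))
  (hu_odd : forall k i, (1 <= i <= M k)%N -> odd i ->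
      u k i 0 = xg k i.-1 /\ u k i 1 = xg k i)
  (hu_even : forall k i, (1 <= i <= M k)%N -> ~~ odd i ->
      u k i 0 = xg k i /\ u k i 1 = xg k i.-1)
  (F : ('I_q -> nat) -> ('I_q -> R) -> R -> R)
  (hF_cont : forall i, idx_range M i -> cont_IqR (F i))
  (hF_vert : forall i, idx_range M i ->
      forall kk : 'I_q -> nat, (forall j, kk j = 0%N \/ kk j = M j) ->
        F i (grid xg kk) (z kk) = z (fun j => eta (i j) (kk j)))
  (hF_contr : forall i, idx_range M i ->
      exists gamma, 0 < gamma < 1 /\
        forall x, inIq x -> forall z1 z2 : R,
          Rabs (F i x z1 - F i x z2) <= gamma * Rabs (z1 - z2))
  (hF_match : forall (k : 'I_q) i, idx_range M i -> (i k < M k)%N ->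
      forall xstar, inI xstar -> u k (i k) xstar = xg k (i k) ->
      forall x, inIq x -> forall w : R,
        F i (upd x k xstar) w = F (updn i k (i k).+1) (upd x k xstar) w).

Lemma xg_le k n m : (n <= m)%N -> (m <= M k)%N -> xg k n <= xg k m.
Proof.
move=> /subnKC <-; elim: (m - n)%N => [|d IH] H; first by rewrite addn0; lra.
rewrite addnS in H *; apply: Rle_trans (IH (ltnW H)) _.
by apply: Rlt_le; apply: hxinc.
Qed.

Lemma xg_lt k n m : (n < m)%N -> (m <= M k)%N -> xg k n < xg k m.
Proof.
move=> H1 H2; apply: (Rlt_le_trans _ (xg k n.+1)).
  apply: hxinc; exact: leq_trans H1 H2.
exact: xg_le.
Qed.

Lemma xg_01 k n : (n <= M k)%N -> 0 <= xg k n <= 1.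
Proof.
move=> H; rewrite -(hx0 k) -(hxM k); split; apply: xg_le => //.
Qed.

Lemma u_range k i t : (1 <= i <= M k)%N -> inI t ->
  xg k i.-1 <= u k i t <= xg k i.
Proof. by move=> /hu_homeo [_ [g [H _]]] Ht; case: (H t Ht). Qed.

Lemma u_inj k i s s' : (1 <= i <= M k)%N -> inI s -> inI s' ->
  u k i s = u k i s' -> s = s'.
Proof.
move=> /hu_homeo [_ [g [H _]]] Hs Hs' E.
by rewrite -(proj2 (H s Hs)) -(proj2 (H s' Hs')) E.
Qed.

Lemma u_surj k i t : (1 <= i <= M k)%N -> xg k i.-1 <= t <= xg k i ->
  exists s, inI s /\ u k i s = t.
Proof.
move=> /hu_homeo [_ [g [_ [H _]]]] Ht; exists (g t); exact: H.
Qed.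

Lemma cells_adj k a b t : (1 <= a)%N -> (a < b)%N -> (b <= M k)%N ->
  t <= xg k a -> xg k b.-1 <= t -> b = a.+1 /\ t = xg k a.
Proof.
move=> Ha Hab Hb H1 H2.
case: (ltngtP b a.+1) => Hc.
- by move: Hc; rewrite ltnS leqNgt Hab.
- have : xg k a < xg k b.-1.
    apply: xg_lt; last by apply: leq_trans (leq_pred _) Hb.
    by rewrite -ltnS prednK // (leq_ltn_trans _ Hab).
  lra.
- split=> //; move: H2; rewrite Hc /=; lra.
Qed.

Lemma parity_pre k a s s' : (1 <= a)%N -> (a < M k)%N -> inI s -> inI s' ->
  u k a s = xg k a -> u k a.+1 s' = xg k a -> s = s'.
Proof.
move=> H1 H2 Hs Hs' E1 E2.
have Ra : (1 <= a <= M k)%N by rewrite H1 ltnW.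
have Rb : (1 <= a.+1 <= M k)%N by rewrite H2.
have I0 : inI 0 by split; lra.
have I1 : inI 1 by split; lra.
case Ho: (odd a).
- have [_ O1] := hu_odd Ra Ho.
  have [_ E1'] := hu_even Rb ltac:(by rewrite /= Ho).
  have -> : s = 1 by apply: (u_inj Ra) => //; rewrite E1 O1.
  by apply: (u_inj Rb) => //; rewrite E2 E1'.
- have [O1 _] := hu_even Ra ltac:(by rewrite Ho).
  have [E1' _] := hu_odd Rb ltac:(by rewrite /= Ho).
  have -> : s = 0 by apply: (u_inj Ra) => //; rewrite E1 O1.
  by apply: (u_inj Rb) => //; rewrite E2 E1'.
Qed.

Lemma same_pre k a b s s' : (1 <= a <= M k)%N -> (1 <= b <= M k)%N ->
  inI s -> inI s' -> u k a s = u k b s' ->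
  s = s' /\ (a = b \/ (b = a.+1 /\ u k a s = xg k a) \/
             (a = b.+1 /\ u k b s' = xg k b)).
Proof.
move=> Ra Rb Hs Hs' E.
have [Ra1 Ra2] := u_range Ra Hs.
have [Rb1 Rb2] := u_range Rb Hs'.
case/andP: Ra => Ha1 Ha2; case/andP: Rb => Hb1 Hb2.
case: (ltngtP a b) => Hab.
- have [Eb Et] := cells_adj (t:=u k a s) Ha1 Hab Hb2 Ra2 ltac:(by rewrite E).
  subst b; split; last by right; left.
  by apply: (parity_pre Ha1 Hb2 Hs Hs' Et); rewrite -E.
- have [Ea Et] := cells_adj (t:=u k b s') Hb1 Hab Ha2 Rb2 ltac:(by rewrite -E).
  subst a; split; last by right; right.
  by symmetry; apply: (parity_pre Hb1 Ha2 Hs' Hs Et); rewrite E.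
- subst b; split; last by left.
  by apply: (@u_inj k a) => //; rewrite Ha1.
Qed.

Lemma chain (i' : 'I_q -> nat) (x : 'I_q -> R) (w : R) : idx_range M i' -> inIq x ->
  forall (s : seq 'I_q) i, idx_range M i ->
   (forall k, k \notin s -> i k = i' k) ->
   (forall k, i k = i' k \/ (i' k = (i k).+1 /\ u k (i k) (x k) = xg k (i k)) \/
              (i k = (i' k).+1 /\ u k (i' k) (x k) = xg k (i' k))) ->
   F i x w = F i' x w.
Proof.
move=> Ri' Hx; elim=> [|k s IH] i Ri Hout Hc.
  have -> // : i = i' by apply: functional_extensionality => k; apply: Hout.
pose i'' := updn i k (i' k).
have Ri'' : idx_range M i''.
  by move=> j; rewrite /i'' /updn; case: eqP => [->|_]; [apply: Ri' | apply: Ri].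
have E2 : F i'' x w = F i' x w.
  apply: IH => // [j Hj|j].
    rewrite /i'' /updn; case: eqP => [->|Hjk] //; apply: Hout.
    rewrite in_cons negb_or Hj andbT; by apply/eqP.
  by rewrite /i'' /updn; case: eqP => [->|_]; [left | exact: Hc].
rewrite -E2.
have Ux : upd x k (x k) = x.
  by apply: functional_extensionality => j; rewrite /upd; case: eqP => // ->.
case: (Hc k) => [E | [[E1 E2'] | [E1 E2']]].
- have -> // : i'' = i.
  by apply: functional_extensionality => j; rewrite /i'' /updn; case: eqP => // ->.
- have Hlt : (i k < M k)%N by have := Ri' k; rewrite E1 => /andP [].
  have := hF_match Ri Hlt (Hx k) E2' Hx w; rewrite Ux => ->.
  by rewrite /i'' E1.
- have Hk : i'' k = i' k by rewrite /i'' /updn eqxx.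
  have Hlt : (i'' k < M k)%N by have := Ri k; rewrite Hk E1 => /andP [].
  have := hF_match Ri'' Hlt (Hx k) ltac:(by rewrite Hk) Hx w; rewrite Ux => ->.
  have -> // : updn i'' k (i'' k).+1 = i.
  apply: functional_extensionality => j; rewrite /updn /i'' /updn.
  by case: eqP => // ->; rewrite eqxx E1.
Qed.

Lemma WD (f : ('I_q -> R) -> R) i x i' x' : idx_range M i -> idx_range M i' ->
  inIq x -> inIq x' -> (forall k, u k (i k) (x k) = u k (i' k) (x' k)) ->
  F i x (f x) = F i' x' (f x').
Proof.
move=> Ri Ri' Hx Hx' E.
have Hsp k := same_pre (Ri k) (Ri' k) (Hx k) (Hx' k) (E k).
have ex : x = x' by apply: functional_extensionality => k; case: (Hsp k).
subst x'.
apply: (@chain i' x (f x) Ri' Hx (enum 'I_q) i Ri) => k; first by rewrite mem_enum.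
by case: (Hsp k) => _ [|[[? ?]|[? ?]]]; [left|right;left|right;right].
Qed.

Definition cellf k t := epsilon (inhabits 1%N)
  (fun i => (1 <= i <= M k)%N /\ xg k i.-1 <= t <= xg k i).

Lemma cell_ex k t : inI t -> exists i, (1 <= i <= M k)%N /\ xg k i.-1 <= t <= xg k i.
Proof.
move=> Ht.
have H : forall n, (1 <= n <= M k)%N -> t <= xg k n ->
   exists i, (1 <= i <= M k)%N /\ xg k i.-1 <= t <= xg k i.
  elim=> [|n IH] // /andP [Hn1 Hn2] Htn.
  case: n IH Hn1 Hn2 Htn => [|n] IH _ Hn2 Htn.
    exists 1%N; split; first by rewrite /= (ltnW (hM k)).
    by rewrite /= hx0; case: Ht.
  case: (Rle_dec t (xg k n.+1)) => H.
    by apply: IH => //; rewrite /= ltnW.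
  exists n.+2; split; first by rewrite Hn2.
  by rewrite /=; lra.
apply: (H (M k)); first by rewrite (ltnW (hM k)) leqnn.
by rewrite hxM; case: Ht.
Qed.

Lemma cell_spec k t : inI t ->
  (1 <= cellf k t <= M k)%N /\ xg k (cellf k t).-1 <= t <= xg k (cellf k t).
Proof. move=> Ht; exact: (epsilon_spec _ _ (cell_ex k Ht)). Qed.

Definition preim k i t := epsilon (inhabits 0) (fun s => inI s /\ u k i s = t).

Lemma preim_spec k i t : (1 <= i <= M k)%N -> xg k i.-1 <= t <= xg k i ->
  inI (preim k i t) /\ u k i (preim k i t) = t.
Proof. move=> Ri Ht; exact: (epsilon_spec _ _ (u_surj Ri Ht)). Qed.

Definition ci (y : 'I_q -> R) : 'I_q -> nat := fun k => cellf k (y k).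
Definition pre (i : 'I_q -> nat) (y : 'I_q -> R) : 'I_q -> R :=
  fun k => preim k (i k) (y k).
Definition incell (i : 'I_q -> nat) (y : 'I_q -> R) :=
  forall k, xg k (i k).-1 <= y k <= xg k (i k).
Definition Top (f : ('I_q -> R) -> R) (y : 'I_q -> R) :=
  F (ci y) (pre (ci y) y) (f (pre (ci y) y)).

Lemma ci_spec y : inIq y -> idx_range M (ci y) /\ incell (ci y) y.
Proof. by move=> Hy; split=> k; have := cell_spec k (Hy k) => -[]. Qed.

Lemma pre_spec i y : idx_range M i -> incell i y ->
  inIq (pre i y) /\ forall k, u k (i k) (pre i y k) = y k.
Proof. by move=> Ri Hy; split=> k; have := preim_spec (Ri k) (Hy k) => -[]. Qed.

Lemma inIq_u i x y : idx_range M i -> inIq x -> (forall k, y k = u k (i k) (x k)) ->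
  inIq y.
Proof.
move=> Ri Hx E k; rewrite E; have := u_range (Ri k) (Hx k).
have /andP [_ H2] := Ri k.
have := xg_01 H2; have := xg_01 (leq_trans (leq_pred _) H2); rewrite /inI; lra.
Qed.

Lemma Top_eq f y i x : idx_range M i -> inIq x ->
  (forall k, y k = u k (i k) (x k)) -> Top f y = F i x (f x).
Proof.
move=> Ri Hx E.
have Hy := inIq_u Ri Hx E.
have [Rc Hc] := ci_spec Hy.
have [Hp Ep] := pre_spec Rc Hc.
rewrite /Top; apply: WD => // k; by rewrite Ep E.
Qed.


Lemma fin_min_idx (P : ('I_q -> nat) -> R -> Prop) :
  (forall t d d', 0 < d' <= d -> P t d -> P t d') ->
  (forall i, idx_range M i -> exists d, 0 < d /\ P i d) ->
  exists d, 0 < d /\ forall i, idx_range M i -> P i d.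
Proof.
move=> Hdn H.
pose N := (\max_(k : 'I_q) M k).+1.
pose cv := fun (phi : {ffun 'I_q -> 'I_N}) (k : 'I_q) => nat_of_ord (phi k).
have [d [Hd Hp]] := @fin_min_fin {ffun 'I_q -> 'I_N}
   (fun phi d => idx_range M (cv phi) -> P (cv phi) d)
   ltac:(move=> t d d' Hdd H1 H2; exact: Hdn Hdd (H1 H2))
   ltac:(move=> t; case: (classic (idx_range M (cv t))) => Hr;
          [ have [d [Hd Pd]] := H _ Hr; by exists d | by exists 1; split; [lra|]]).
exists d; split=> // i Ri.
pose phi : {ffun 'I_q -> 'I_N} := [ffun k => inord (i k)].
have E : cv phi = i.
  apply: functional_extensionality => k; rewrite /cv /phi ffunE inordK //.
  rewrite ltnS; apply: leq_trans (leq_bigmax k); by have /andP [] := Ri k.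
by have := Hp phi; rewrite E; apply.
Qed.

Lemma preim_cont k i s eps : (1 <= i <= M k)%N -> xg k i.-1 <= s <= xg k i -> 0 < eps ->
  exists d, 0 < d /\ forall t, xg k i.-1 <= t <= xg k i -> Rabs (t - s) < d ->
    Rabs (preim k i t - preim k i s) < eps.
Proof.
move=> Ri Hs Heps; have Ri' := Ri; move: Ri => /hu_homeo [_ [g [H1 [H2 H3]]]].
have E : forall t, xg k i.-1 <= t <= xg k i -> preim k i t = g t.
  move=> t Ht; have [p1 p2] := preim_spec Ri' Ht; have [g1 g2] := H2 t Ht.
  by apply: (u_inj Ri') => //; rewrite p2 g2.
have [d [Hd P]] := H3 s Hs eps Heps.
exists d; split=> // t Ht Hts; rewrite !E //; exact: P.
Qed.

Lemma cell_sep k s : inI s -> exists d, 0 < d /\ forall t j, Rabs (t - s) < d ->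
  (1 <= j <= M k)%N -> xg k j.-1 <= t <= xg k j -> xg k j.-1 <= s <= xg k j.
Proof.
move=> Hs.
have [d [Hd P]] := @fin_min_seq nat
  (fun n d => xg k n <> s -> d <= Rabs (xg k n - s)) (iota 0 (M k).+1)
  ltac:(move=> t d d' Hdd H1 H2; have := H1 H2; lra)
  ltac:(move=> n _; case: (classic (xg k n = s)) => H;
    [ by exists 1; split; [lra|] | exists (Rabs (xg k n - s)); split; last lra;
      apply: Rabs_pos_lt; lra]).
exists d; split=> // t j Hts /andP [Hj1 Hj2] [Ht1 Ht2].
have I1 : j.-1 \in iota 0 (M k).+1 by rewrite mem_iota add0n ltnS (leq_trans (leq_pred _) Hj2).
have I2 : j \in iota 0 (M k).+1 by rewrite mem_iota add0n ltnS Hj2.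
split.
  apply: Rnot_lt_le => Hc; have := P _ I1 ltac:(lra); move: Hts; split_Rabs; lra.
apply: Rnot_lt_le => Hc; have := P _ I2 ltac:(lra); move: Hts; split_Rabs; lra.
Qed.

Lemma Top_cont f : cont_Iq f -> cont_Iq (Top f).
Proof.
move=> Hf y Hy eps Heps.
have [da [Hda Pa]] : exists d, 0 < d /\ forall k t j, Rabs (t - y k) < d ->
    (1 <= j <= M k)%N -> xg k j.-1 <= t <= xg k j -> xg k j.-1 <= y k <= xg k j.
  have [d [Hd P]] := @fin_min_fin 'I_q (fun k d => forall t j, Rabs (t - y k) < d ->
    (1 <= j <= M k)%N -> xg k j.-1 <= t <= xg k j -> xg k j.-1 <= y k <= xg k j)
    ltac:(move=> k d d' Hdd H1 t j Ht; apply: H1; lra)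
    ltac:(move=> k; exact: cell_sep (Hy k)).
  by exists d; split.
have [db [Hdb Pb]] := @fin_min_idx (fun i d => incell i y -> forall y', inIq y' ->
     (forall k, Rabs (y' k - y k) < d) -> incell i y' ->
     Rabs (F i (pre i y') (f (pre i y')) - F i (pre i y) (f (pre i y))) < eps)
  ltac:(move=> i d d' Hdd H1 H2 y' Hy' Hc; apply: H1 => // k; have := Hc k; lra)
  ltac:(move=> i Ri; case: (classic (incell i y)) => Hyc; last first;
     [ by exists 1; split; [lra| ] | ];
     have [Hx0 Ex0] := pre_spec Ri Hyc;
     have [d1 [Hd1 P1]] := hF_cont Ri (f (pre i y)) Hx0 Heps;
     have [d2 [Hd2 P2]] := Hf _ Hx0 d1 Hd1;
     have [d4 [Hd4 P4]] := @fin_min_fin 'I_q (fun k d => forall t,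
        xg k (i k).-1 <= t <= xg k (i k) -> Rabs (t - y k) < d ->
        Rabs (preim k (i k) t - preim k (i k) (y k)) < Rmin d1 d2)
       ltac:(move=> k d d' Hdd H1 t Ht Htd; apply: H1 => //; lra)
       ltac:(move=> k; exact: preim_cont (Ri k) (Hyc k) (Rmin_pos _ _ Hd1 Hd2));
     exists d4; split=> // _ y' Hy' Hd Hc';
     have [Hx' _] := pre_spec Ri Hc';
     apply: P1 => // [k|];
     [ have := P4 k (y' k) (Hc' k) (Hd k); have := Rmin_l d1 d2; rewrite /pre; lra
     | apply: P2 => // k; have := P4 k (y' k) (Hc' k) (Hd k); have := Rmin_r d1 d2;
       rewrite /pre; lra ]).
exists (Rmin da db); split; first by apply: Rmin_pos.
move=> y' Hy' Hd.
have [Rc Hc] := ci_spec Hy'.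
have Hyc : incell (ci y') y.
  move=> k; apply: (Pa k (y' k) _ _ (Rc k) (Hc k)).
  by have := Hd k; have := Rmin_l da db; lra.
have [Hp Ep] := pre_spec Rc Hyc.
have -> : Top f y = F (ci y') (pre (ci y') y) (f (pre (ci y') y)).
  by apply: Top_eq => // k; rewrite Ep.
apply: (Pb _ Rc Hyc y' Hy' _ Hc) => k.
have := Hd k; have := Rmin_r da db; lra.
Qed.


Lemma gam_ex : exists g, 0 <= g < 1 /\ forall i, idx_range M i -> forall x, inIq x ->
  forall z1 z2, Rabs (F i x z1 - F i x z2) <= g * Rabs (z1 - z2).
Proof.
pose P i d := forall x, inIq x -> forall z1 z2,
  Rabs (F i x z1 - F i x z2) <= (1 - d) * Rabs (z1 - z2).
have Hdn : forall t d d', 0 < d' <= d -> P t d -> P t d'.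
  move=> t d d' Hd H x Hx z1 z2; apply: Rle_trans (H x Hx z1 z2) _.
  apply: Rmult_le_compat_r; [exact: Rabs_pos | lra].
have Hex : forall i, idx_range M i -> exists d, 0 < d /\ P i d.
  move=> i Ri; have [g [Hg Hc]] := hF_contr Ri; exists (1 - g); split; first lra.
  move=> x Hx z1 z2; have := Hc x Hx z1 z2.
  by have -> : 1 - (1 - g) = g by ring.
have [d [Hd HP]] := @fin_min_idx P Hdn Hex.
exists (1 - Rmin d (1/2)); split.
  have := Rmin_r d (1/2); have := Rmin_pos d (1/2) Hd ltac:(lra); lra.
move=> i Ri; apply: Hdn (HP i Ri); split; [apply: Rmin_pos; lra | apply: Rmin_l].
Qed.

Lemma Top_contr g : (forall i, idx_range M i -> forall x, inIq x ->
  forall z1 z2, Rabs (F i x z1 - F i x z2) <= g * Rabs (z1 - z2)) ->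
  forall f1 f2 y, inIq y -> exists x, inIq x /\
    Rabs (Top f1 y - Top f2 y) <= g * Rabs (f1 x - f2 x).
Proof.
move=> Hg f1 f2 y Hy.
have [Rc Hc] := ci_spec Hy; have [Hp _] := pre_spec Rc Hc.
exists (pre (ci y) y); split=> //; exact: Hg.
Qed.

Definition phiv (j : 'I_q -> nat) : 'I_q -> nat := fun k => if odd (j k) then M k else 0%N.
Definition iotv (j : 'I_q -> nat) : 'I_q -> nat := fun k => if j k == 0%N then 1%N else j k.

Lemma vert_facts j : (forall k, (j k <= M k)%N) ->
  idx_range M (iotv j) /\ inIq (grid xg (phiv j)) /\
  (forall k, grid xg j k = u k (iotv j k) (grid xg (phiv j) k)) /\
  (forall k, phiv j k = 0%N \/ phiv j k = M k) /\
  (fun k => eta (iotv j k) (phiv j k)) = j.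
Proof.
move=> Hj.
have I0 : inI 0 by split; lra.
have I1 : inI 1 by split; lra.
split.
  move=> k; rewrite /iotv; case: eqP => [_|/eqP H].
    by rewrite /= (ltnW (hM k)).
  by rewrite lt0n H Hj.
split.
  by move=> k; rewrite /grid /phiv; case: odd; [rewrite hxM | rewrite hx0].
split.
  move=> k; rewrite /grid /phiv /iotv; case: eqP => [E|/eqP H].
    rewrite E /= hx0.
    have R1 : (1 <= 1 <= M k)%N by rewrite /= (ltnW (hM k)).
    by have [-> _] := hu_odd R1 erefl.
  have Rj : (1 <= j k <= M k)%N by rewrite lt0n H Hj.
  case Ho: (odd (j k)).
    by rewrite hxM; have [_ ->] := hu_odd Rj Ho.
  by rewrite hx0; have [-> _] := hu_even Rj ltac:(by rewrite Ho).
split.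
  by move=> k; rewrite /phiv; case: odd; [right|left].
apply: functional_extensionality => k.
rewrite /eta /iotv /phiv; case: eqP => [E|/eqP H].
  by rewrite E.
case Ho: (odd (j k)) => /=.
  by case: eqP => // E; move: (hM k); rewrite E.
by [].
Qed.

Lemma phiv3 j : phiv (phiv (phiv j)) = phiv (phiv j).
Proof.
apply: functional_extensionality => k; rewrite /phiv.
by case: (odd (j k)); case Ho: (odd (M k)) => //=; rewrite Ho.
Qed.

Lemma phiv_le j : forall k, (phiv j k <= M k)%N.
Proof. by move=> k; rewrite /phiv; case: odd. Qed.

Lemma main : exists A : ('I_q -> R) -> R,
    cont_Iq A /\
    (forall (y : 'I_q -> R) (w : R),
       (inIq y /\ w = A y) <->
       (exists i x, idx_range M i /\ inIq x /\
          (forall k, y k = u k (i k) (x k)) /\ w = F i x (A x))) /\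
    (forall j : 'I_q -> nat, (forall k, (j k <= M k)%N) -> A (grid xg j) = z j) /\
    (forall B : ('I_q -> R) -> R,
       cont_Iq B ->
       (forall (y : 'I_q -> R) (w : R),
          (inIq y /\ w = B y) <->
          (exists i x, idx_range M i /\ inIq x /\
             (forall k, y k = u k (i k) (x k)) /\ w = F i x (B x))) ->
       forall x, inIq x -> B x = A x).
Proof.
have [g [Hg Hgc]] := gam_ex.
have HT := Top_contr Hgc.
pose fs n := iter n Top (fun _ => 0).
have fs_cont : forall n, cont_Iq (fs n).
  elim=> [|n IH]; last exact: Top_cont.
  move=> y _ eps He; exists 1; split; [lra|] => y' _ _; rewrite /fs /=.
  by rewrite Rminus_0_r Rabs_R0.
have [B0 HB0] := cont_bounded (fs_cont 1%N).
have I0 : inIq (fun _ : 'I_q => 0) by move=> k; split; lra.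
have B0p : 0 <= B0 by apply: Rle_trans (HB0 _ I0); exact: Rabs_pos.
have Hd : forall n y, inIq y -> Rabs (fs n.+1 y - fs n y) <= g ^ n * B0.
  elim=> [|n IH] y Hy.
    by rewrite /= Rminus_0_r Rmult_1_l; exact: HB0.
  have [x [Hx Hxy]] := HT (fs n.+1) (fs n) y Hy.
  apply: Rle_trans Hxy _; rewrite /= Rmult_assoc.
  apply: Rmult_le_compat_l; [lra | exact: IH].
pose C0 := B0 / (1 - g).
have C0p : 0 <= C0 by apply: Rmult_le_pos; [lra | apply: Rlt_le; apply: Rinv_0_lt_compat; lra].
have Hcs : forall m p y, inIq y -> Rabs (fs (m + p)%N y - fs m y) <= g ^ m * C0.
  move=> m p y Hy.
  suff : (1 - g) * Rabs (fs (m + p)%N y - fs m y) <= g ^ m * B0 * (1 - g ^ p).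
    move=> H.
    have gp := pow_le g p (proj1 Hg); have gm := pow_le g m (proj1 Hg).
    have E : g ^ m * C0 * (1 - g) = g ^ m * B0 by rewrite /C0; field; lra.
    apply: (Rmult_le_reg_r (1 - g)); first lra.
    rewrite E Rmult_comm; apply: Rle_trans H _.
    have : 0 <= g ^ m * B0 * g ^ p by apply: Rmult_le_pos => //; apply: Rmult_le_pos.
    lra.
  elim: p => [|p IH].
    by rewrite addn0 Rminus_diag Rabs_R0 /= Rmult_0_r; lra.
  rewrite addnS.
  have H1 := Hd (m + p)%N y Hy.
  have E : g ^ (m + p)%N = g ^ m * g ^ p by rewrite pow_add.
  rewrite E in H1.
  have Htri : Rabs (fs (m + p).+1 y - fs m y) <=
      Rabs (fs (m + p).+1 y - fs (m + p)%N y) + Rabs (fs (m + p)%N y - fs m y).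
    by move: (fs (m + p).+1 y) (fs (m + p)%N y) (fs m y) => a b c; split_Rabs; lra.
  apply: Rle_trans (Rmult_le_compat_l (1 - g) _ _ ltac:(lra) Htri) _.
  rewrite Rmult_plus_distr_l.
  have := Rmult_le_compat_l (1 - g) _ _ ltac:(lra) H1.
  rewrite /= ; nra.
pose A y := epsilon (inhabits 0) (fun l => Un_cv (fun n => fs n y) l).
have HAcv : forall y, inIq y -> Un_cv (fun n => fs n y) (A y).
  move=> y Hy; apply: (epsilon_spec (inhabits 0) (fun l => Un_cv (fun n => fs n y) l)).
  suff HC : Cauchy_crit (fun n => fs n y).
    by have [l Hl] := R_complete _ HC; exists l.
  move=> eps He.
  have [N HN] := gsmall Hg C0p He.
  exists N => n m /leP Hn /leP Hm; rewrite /Rdist.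
  case: (leqP m n) => Hmn.
    rewrite -(subnKC Hmn); apply: Rle_lt_trans (Hcs _ _ _ Hy) _; exact: HN.
  rewrite Rabs_minus_sym -(subnKC (ltnW Hmn)).
  apply: Rle_lt_trans (Hcs _ _ _ Hy) _; exact: HN.
have HAu : forall m y, inIq y -> Rabs (A y - fs m y) <= g ^ m * C0.
  move=> m y Hy; apply: (lim_le (m := m) (HAcv y Hy)) => n Hn.
  rewrite -(subnKC Hn); exact: Hcs.
have HAT : forall y, inIq y -> A y = Top A y.
  move=> y Hy; apply: Rminus_diag_uniq; apply: zero_of_small => eps He.
  have [N HN] := gsmall Hg C0p (ltac:(lra) : 0 < eps / 2).
  have H1 := HAu N.+1 y Hy.
  have H2 := HN N.+1 (leqnSn N).
  have H3 := HN N (leqnn N).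
  have [x [Hx Hxy]] := HT A (fs N) y Hy.
  have H4 := HAu N x Hx.
  have H5 : g * Rabs (A x - fs N x) <= g ^ N * C0.
    have := Rabs_pos (A x - fs N x); nra.
  have : Rabs (Top A y - fs N.+1 y) <= g ^ N * C0 by apply: Rle_trans Hxy H5.
  move: H1; rewrite [fs N.+1 y]/=; move: (A y) (Top A y) (Top (fs N) y) => a b c.
  move=> H1 H6; split_Rabs; lra.
have A_cont : cont_Iq A.
  move=> y Hy eps He.
  have [N HN] := gsmall Hg C0p (ltac:(lra) : 0 < eps / 3).
  have HNN := HN N (leqnn N).
  have [d [Hd0 P]] := fs_cont N y Hy (eps / 3) ltac:(lra).
  exists d; split=> // y' Hy' Hc.
  have := P y' Hy' Hc; have := HAu N y Hy; have := HAu N y' Hy'.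
  move: (A y) (A y') (fs N y) (fs N y') => a b c e; split_Rabs; lra.
have HAgraph : forall (y : 'I_q -> R) (w : R),
       (inIq y /\ w = A y) <->
       (exists i x, idx_range M i /\ inIq x /\
          (forall k, y k = u k (i k) (x k)) /\ w = F i x (A x)).
  move=> y w; split.
    move=> [Hy ->]; have [Rc Hc] := ci_spec Hy; have [Hp Ep] := pre_spec Rc Hc.
    exists (ci y), (pre (ci y) y); split=> //; split=> //; split.
      by move=> k; rewrite Ep.
    exact: HAT y Hy.
  move=> [i [x [Ri [Hx [E ->]]]]]; have Hy := inIq_u Ri Hx E; split=> //.
  by rewrite (HAT y Hy); symmetry; apply: Top_eq.
have Hv1 : forall j, (forall k, (j k <= M k)%N) ->
    A (grid xg j) = F (iotv j) (grid xg (phiv j)) (A (grid xg (phiv j))) /\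
    z j = F (iotv j) (grid xg (phiv j)) (z (phiv j)).
  move=> j Hj; have [Ri [Hx [E [Hc Eeta]]]] := vert_facts Hj.
  split; last by rewrite hF_vert // Eeta.
  by rewrite HAT; [apply: Top_eq | apply: inIq_u Ri Hx E].
have Hfix : forall c, (forall k, (c k <= M k)%N) -> phiv c = c -> A (grid xg c) = z c.
  move=> c Hc Ec; have [H1 H2] := Hv1 c Hc.
  have [Ri [Hx _]] := vert_facts Hc.
  rewrite Ec in H1 H2 Hx.
  have := Hgc _ Ri _ Hx (A (grid xg c)) (z c); rewrite -H1 -H2 => H.
  apply: Rminus_diag_uniq; apply: zero_of_small => eps He.
  have := Rabs_pos (A (grid xg c) - z c); nra.
have Hvert : forall j : 'I_q -> nat, (forall k, (j k <= M k)%N) -> A (grid xg j) = z j.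
  move=> j Hj.
  have Fx := Hfix (phiv (phiv j)) (phiv_le _) (phiv3 j).
  have [H1 H2] := Hv1 _ (phiv_le j).
  have E2 : A (grid xg (phiv j)) = z (phiv j) by rewrite H1 H2 Fx.
  by have [-> ->] := Hv1 _ Hj; rewrite E2.
exists A; split=> //; split=> //; split=> //.
move=> Bf HBc HBg x Hx.
have [KB HKB] := cont_bounded HBc; have [KA HKA] := cont_bounded A_cont.
have Kp : 0 <= KB + KA.
  have := HKB _ I0; have := HKA _ I0; have := Rabs_pos (Bf (fun _ => 0));
  have := Rabs_pos (A (fun _ => 0)); lra.
have Hn : forall n y, inIq y -> Rabs (Bf y - A y) <= g ^ n * (KB + KA).
  elim=> [|n IH] y Hy.
    rewrite /= Rmult_1_l; have := HKB y Hy; have := HKA y Hy.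
    move: (Bf y) (A y) => a b; split_Rabs; lra.
  have [i [x' [Ri [Hx' [E Ew]]]]] := (proj1 (HBg y (Bf y))) (conj Hy erefl).
  have EA : A y = F i x' (A x') by rewrite (HAT y Hy); apply: Top_eq.
  rewrite [in X in Rabs (X - _)]Ew EA.
  apply: Rle_trans (Hgc _ Ri _ Hx' (Bf x') (A x')) _.
  rewrite /= Rmult_assoc; apply: Rmult_le_compat_l; [lra | exact: IH].
apply: Rminus_diag_uniq; apply: zero_of_small => eps He.
have [N HN] := gsmall Hg Kp He.
have := Hn N x Hx; have := HN N (leqnn N); lra.
Qed.

End Main.

End Main1.

Theorem theorem3p1
  (q : nat) (hq : (1 <= q)%N)
  (M : 'I_q -> nat) (hM : forall k, (2 <= M k)%N)
  (xg : 'I_q -> nat -> R)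
  (hx0 : forall k, xg k 0%N = 0)
  (hxM : forall k, xg k (M k) = 1)
  (hxinc : forall k n, (n < M k)%N -> xg k n < xg k n.+1)
  (z : ('I_q -> nat) -> R)
  (u : 'I_q -> nat -> R -> R)
  (hu_homeo : forall k i, (1 <= i <= M k)%N ->
      homeo_onto (u k i) (xg k i.-1) (xg k i))
  (hu_contr : forall k i, (1 <= i <= M k)%N -> contraction_on_I (u k i))
  (hu_odd : forall k i, (1 <= i <= M k)%N -> odd i ->
      u k i 0 = xg k i.-1 /\ u k i 1 = xg k i)
  (hu_even : forall k i, (1 <= i <= M k)%N -> ~~ odd i ->
      u k i 0 = xg k i /\ u k i 1 = xg k i.-1)
  (F : ('I_q -> nat) -> ('I_q -> R) -> R -> R)
  (hF_cont : forall i, idx_range M i -> cont_IqR (F i))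
  (hF_vert : forall i, idx_range M i ->
      forall kk : 'I_q -> nat, (forall j, kk j = 0%N \/ kk j = M j) ->
        F i (grid xg kk) (z kk) = z (fun j => eta (i j) (kk j)))
  (hF_contr : forall i, idx_range M i ->
      exists gamma, 0 < gamma < 1 /\
        forall x, inIq x -> forall z1 z2 : R,
          Rabs (F i x z1 - F i x z2) <= gamma * Rabs (z1 - z2))
  (hF_match : forall (k : 'I_q) i, idx_range M i -> (i k < M k)%N ->
      forall xstar, inI xstar -> u k (i k) xstar = xg k (i k) ->
      forall x, inIq x -> forall w : R,
        F i (upd x k xstar) w = F (updn i k (i k).+1) (upd x k xstar) w) :
  exists A : ('I_q -> R) -> R,
    cont_Iq A /\
    (forall (y : 'I_q -> R) (w : R),
       (inIq y /\ w = A y) <->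
       (exists i x, idx_range M i /\ inIq x /\
          (forall k, y k = u k (i k) (x k)) /\ w = F i x (A x))) /\
    (forall j : 'I_q -> nat, (forall k, (j k <= M k)%N) -> A (grid xg j) = z j) /\
    (forall B : ('I_q -> R) -> R,
       cont_Iq B ->
       (forall (y : 'I_q -> R) (w : R),
          (inIq y /\ w = B y) <->
          (exists i x, idx_range M i /\ inIq x /\
             (forall k, y k = u k (i k) (x k)) /\ w = F i x (B x))) ->
       forall x, inIq x -> B x = A x).
Proof.
exact: (Main1.main hM hx0 hxM hxinc hu_homeo hu_odd hu_even hF_cont hF_vert hF_contr hF_match).
Qed.
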